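(* Let $(X,d)$ be a metric space which is not a singleton and let $(a_n)_{n\in\mathbb{N}^*}$ be a bounded sequence of positive reals. Let $\tau_T$ be the Tychonoff topology on $\ell_\infty(X)$ and $\tau_{d_{s,(a_n)}}$ the topology induced by the metric $d_{s,(a_n)}$. Then $\tau_T=\tau_{d_{s,(a_n)}}$ if and only if $a_n\to 0$ and $(X,d)$ is bounded.
   Context: $\mathbb{N}^*=\{0,1,2,\dots\}$. For a metric space $(X,d)$, $\ell_\infty(X)$ denotes the set of all bounded sequences $(x_n)_{n\in\mathbb{N}^*}$ of elements of $X$. For a real sequence $(a_n)$ and $x=(x_n),y=(y_n)\in\ell_\infty(X)$, $d_{s,(a_n)}(x,y):=\sup\{a_n d(x_n,y_n):n\in\mathbb{N}^*\}$ (a metric on $\ell_\infty(X)$ when $(a_n)$ is bounded and positive). The Tychonoff topology on $\ell_\infty(X)$ is the subspace topology induced from the product topology on $\prod_{n\in\mathbb{N}^*}X$, i.e. the topology of coordinatewise convergence. *)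

(* Defs.v *)
From Stdlib Require Import Reals List.
Open Scope R_scope.

Definition is_metric {X : Type} (d : X -> X -> R) : Prop :=
  (forall x y, 0 <= d x y) /\
  (forall x y, d x y = 0 <-> x = y) /\
  (forall x y, d x y = d y x) /\
  (forall x y z, d x z <= d x y + d y z).

Definition metric_bounded {X : Type} (d : X -> X -> R) : Prop :=
  exists M : R, forall x y, d x y <= M.

Definition metric_open {X : Type} (d : X -> X -> R) (O : X -> Prop) : Prop :=
  forall p, O p -> exists r, 0 < r /\ forall q, d p q < r -> O q.

Definition bounded_seq {X : Type} (d : X -> X -> R) (x : nat -> X) : Prop :=
  exists M : R, forall n m, d (x n) (x m) <= M.

Definition linf {X : Type} (d : X -> X -> R) : Type :=
  { x : nat -> X | bounded_seq d x }.

(* open sets of the product (Tychonoff) topology on prod_{n} X: generated by the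
   base of finite intersections of preimages pi_i^{-1}(O) with O open in X *)
Definition product_open {X : Type} (d : X -> X -> R) (U : (nat -> X) -> Prop) : Prop :=
  forall x, U x ->
    exists F : list (nat * (X -> Prop)),
      (forall iO, In iO F -> metric_open d (snd iO) /\ snd iO (x (fst iO))) /\
      (forall y : nat -> X,
          (forall iO, In iO F -> snd iO (y (fst iO))) -> U y).

Definition tychonoff_open {X : Type} (d : X -> X -> R) (V : linf d -> Prop) : Prop :=
  exists U : (nat -> X) -> Prop, product_open d U /\
    forall x : linf d, V x <-> U (proj1_sig x).

(* the set {a_n d(x_n,y_n) : n} whose supremum is d_{s,(a_n)}(x,y) *)
Definition ds_set {X : Type} (d : X -> X -> R) (a : nat -> R) (x y : nat -> X) : R -> Prop :=
  fun t => exists n, t = a n * d (x n) (y n).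

Definition ds_is {X : Type} (d : X -> X -> R) (a : nat -> R) (x y : nat -> X) (s : R) : Prop :=
  is_lub (ds_set d a x y) s.

Definition ds_open {X : Type} (d : X -> X -> R) (a : nat -> R) (V : linf d -> Prop) : Prop :=
  forall x : linf d, V x -> exists r, 0 < r /\
    forall y : linf d,
      (exists s, ds_is d a (proj1_sig x) (proj1_sig y) s /\ s < r) -> V y.

(* Main.v *)
Require Import Defs.
From Stdlib Require Import Reals List Lra Lia Classical.
Open Scope R_scope.

Lemma ball_open {X : Type} (d : X -> X -> R) (Hd : is_metric d) c rho :
  metric_open d (fun q => d c q < rho).
Proof.
  destruct Hd as [H0 [H1 [H2 H3]]]. intros p Hp. exists (rho - d c p). split. lra.
  intros q Hq. pose proof (H3 c p q). lra.
Qed.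

Lemma list_radius {X : Type} (d : X -> X -> R) (a : nat -> R) (Hapos : forall n, 0 < a n)
  (x : nat -> X) (F : list (nat * (X -> Prop))) :
  (forall iO, In iO F -> metric_open d (snd iO) /\ snd iO (x (fst iO))) ->
  exists r, 0 < r /\ forall y : nat -> X, (forall n, a n * d (x n) (y n) < r) ->
     forall iO, In iO F -> snd iO (y (fst iO)).
Proof.
  induction F as [|[i O] F IH]; intros HF.
  - exists 1. split. lra. intros y _ iO [].
  - destruct IH as [r [Hr Hy]]. { intros iO HiO. apply HF. right. exact HiO. }
    destruct (HF (i,O) (or_introl eq_refl)) as [Hop Hx]. simpl in Hop, Hx.
    destruct (Hop _ Hx) as [r0 [Hr0 Hb]].
    exists (Rmin r (a i * r0)). split.
    + apply Rmin_pos; [lra|]. apply Rmult_lt_0_compat; auto.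
    + intros y Hall iO [<-|HiO].
      * simpl. apply Hb. specialize (Hall i). pose proof (Rmin_r r (a i * r0)).
        pose proof (Hapos i). apply (Rmult_lt_reg_l (a i)); [auto|]. lra.
      * apply Hy; auto. intro n. specialize (Hall n). pose proof (Rmin_l r (a i*r0)). lra.
Qed.

Lemma tych_to_ds {X : Type} (d : X -> X -> R) (a : nat -> R) (Hapos : forall n, 0 < a n)
  (V : linf d -> Prop) : tychonoff_open d V -> ds_open d a V.
Proof.
  intros [U [HU HV]] x Vx. apply HV in Vx. destruct (HU _ Vx) as [F [HF HFU]].
  destruct (list_radius d a Hapos _ F HF) as [r [Hr Hy]].
  exists r. split; auto. intros y [s [[Hub _] Hs]]. apply HV. apply HFU. apply Hy.
  intro n. assert (a n * d (proj1_sig x n) (proj1_sig y n) <= s).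
  { apply Hub. exists n. reflexivity. } lra.
Qed.


Lemma fold_ge {A : Type} (F : list (nat * A)) iO : In iO F ->
  (fst iO <= fold_right (fun iO m => Nat.max (fst iO) m) 0%nat F)%nat.
Proof.
  induction F as [|b F IH]; simpl; intros H; [destruct H|].
  destruct H as [<-|H]; [lia|]. specialize (IH H). lia.
Qed.

Lemma not_ds_tych {X : Type} (d : X -> X -> R) (a : nat -> R) (Hd : is_metric d)
  (Hapos : forall n, 0 < a n) (c : X) rho (Hrho : 0 < rho)
  (Hfar : forall N, exists n p, (N <= n)%nat /\ rho <= a n * d c p) :
  ~ (forall V : linf d -> Prop, ds_open d a V -> tychonoff_open d V).
Proof.
  destruct Hd as [H0 [H1 [H2 H3]]].
  intros Hall.
  set (V := fun y : linf d => exists s, s < rho /\ forall n, a n * d c (proj1_sig y n) <= s).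
  assert (HVo : ds_open d a V).
  { intros y [s [Hs Hb]]. exists (rho - s). split. lra.
    intros z [t [[Hub _] Ht]]. exists (s + t). split. lra. intro n.
    specialize (Hb n).
    assert (a n * d (proj1_sig y n) (proj1_sig z n) <= t) by (apply Hub; exists n; reflexivity).
    pose proof (H3 c (proj1_sig y n) (proj1_sig z n)). pose proof (Hapos n).
    assert (a n * d c (proj1_sig z n) <= a n * (d c (proj1_sig y n) + d (proj1_sig y n) (proj1_sig z n)))
      by (apply Rmult_le_compat_l; lra).
    lra. }
  destruct (Hall V HVo) as [U [HU HV]].
  assert (Hcc : d c c = 0) by (apply H1; reflexivity).
  assert (Hcb : bounded_seq d (fun _ : nat => c)). { exists 0. intros. lra. }
  set (cx := exist _ (fun _ : nat => c) Hcb : linf d).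
  assert (Vc : V cx). { exists 0. split; auto. intro n. simpl. rewrite Hcc. lra. }
  apply HV in Vc. destruct (HU _ Vc) as [F [HF HFU]].
  set (N := S (fold_right (fun iO m => Nat.max (fst iO) m) 0%nat F)).
  assert (HN : forall iO, In iO F -> (fst iO < N)%nat).
  { intros iO HiO. pose proof (fold_ge F iO HiO). unfold N. lia. }
  destruct (Hfar N) as [n [p [Hn Hp]]].
  set (y := fun k => if Nat.eqb k n then p else c).
  assert (Hyb : bounded_seq d y).
  { exists (d c p + d p c). pose proof (H0 c p). pose proof (H0 p c).
    assert (d p p = 0) by (apply H1; reflexivity).
    intros k m. unfold y. destruct (Nat.eqb k n), (Nat.eqb m n); lra. }
  assert (Uy : U (proj1_sig (exist _ y Hyb : linf d))).
  { apply HFU. intros iO HiO. simpl. unfold y. destruct (Nat.eqb_spec (fst iO) n).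
    - specialize (HN _ HiO). lia.
    - exact (proj2 (HF _ HiO)). }
  apply HV in Uy. destruct Uy as [s [Hs Hb]]. specialize (Hb n). simpl in Hb.
  unfold y in Hb. rewrite Nat.eqb_refl in Hb. lra.
Qed.

Lemma ds_to_tych {X : Type} (d : X -> X -> R) (a : nat -> R) (Hd : is_metric d)
  (Hapos : forall n, 0 < a n) (Hcv : Un_cv a 0) (M : R) (HM : forall x y, d x y <= M)
  (V : linf d -> Prop) : ds_open d a V -> tychonoff_open d V.
Proof.
  pose proof Hd as [H0 [H1 [H2 H3]]].
  intros HV.
  exists (fun z => exists y : linf d, proj1_sig y = z /\ V y). split.
  - intros z [[y0 Hy0] [Heq Vy]]. simpl in Heq. subst z.
    destruct (HV _ Vy) as [r [Hr Hball]].
    set (K := Rabs M + 1).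
    assert (HK: 0 < K) by (unfold K; pose proof (Rabs_pos M); lra).
    destruct (Hcv (r / (2*K))) as [N HN]. { apply Rdiv_lt_0_compat; lra. }
    exists (map (fun k => (k, fun q => d (y0 k) q < r / (2 * a k))) (seq 0 N)).
    split.
    + intros iO HiO. apply in_map_iff in HiO as [k [<- Hk]]. simpl. split.
      * apply ball_open; auto.
      * rewrite (proj2 (H1 _ _) eq_refl). apply Rdiv_lt_0_compat; [lra|].
        pose proof (Hapos k); lra.
    + intros w Hw.
      assert (Hwb : bounded_seq d w) by (exists M; intros; apply HM).
      exists (exist _ w Hwb). split; [reflexivity|]. apply Hball.
      assert (Hterm : forall n, a n * d (y0 n) (w n) <= r/2).
      { intro n. pose proof (Hapos n) as Han. destruct (Compare_dec.lt_dec n N) as [Hl|Hl].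
        - assert (Hin : In (n, fun q => d (y0 n) q < r / (2 * a n))
              (map (fun k => (k, fun q => d (y0 k) q < r / (2 * a k))) (seq 0 N))).
          { apply in_map_iff. exists n. split; auto. apply in_seq. lia. }
          specialize (Hw _ Hin). simpl in Hw.
          assert (E : a n * d (y0 n) (w n) < a n * (r / (2 * a n)))
            by (apply Rmult_lt_compat_l; auto).
          replace (a n * (r/(2*a n))) with (r/2) in E by (field; lra). lra.
        - specialize (HN n ltac:(lia)). unfold R_dist in HN.
          rewrite Rminus_0_r, Rabs_right in HN by lra.
          pose proof (HM (y0 n) (w n)). pose proof (H0 (y0 n) (w n)). pose proof (Rle_abs M).
          assert (E1 : a n * d (y0 n) (w n) <= a n * K) by (apply Rmult_le_compat_l; unfold K; lra).
          assert (E2 : a n * K <= r/(2*K) * K) by (apply Rmult_le_compat_r; lra).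
          replace (r/(2*K)*K) with (r/2) in E2 by (field; lra). lra. }
      destruct (completeness (ds_set d a y0 w)) as [s Hs].
      { exists (r/2). intros t [n ->]. apply Hterm. }
      { exists (a 0%nat * d (y0 0%nat) (w 0%nat)). exists 0%nat. reflexivity. }
      exists s. split. exact Hs. destruct Hs as [_ Hl].
      assert (s <= r/2). { apply Hl. intros t [n ->]. apply Hterm. } lra.
  - intros x. split.
    + intros Vx. exists x. auto.
    + intros [y [Heq Vy]]. destruct (HV _ Vy) as [r [Hr Hb]]. apply Hb. exists 0. split; [|lra].
      split.
      * intros t [n ->]. rewrite Heq, (proj2 (H1 _ _) eq_refl). lra.
      * intros b Hb'. apply Hb'. exists 0%nat. rewrite Heq, (proj2 (H1 _ _) eq_refl). ring.
Qed.

Theorem mainTheorem2 (X : Type) (d : X -> X -> R) (a : nat -> R)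
  (Hd : is_metric d)
  (Hns : exists x y : X, x <> y)
  (Hapos : forall n, 0 < a n)
  (Habd : exists M : R, forall n, a n <= M) :
  (forall V : linf d -> Prop, tychonoff_open d V <-> ds_open d a V)
  <-> (Un_cv a 0 /\ metric_bounded d).
Proof.
  pose proof Hd as [H0 [H1 [H2 H3]]].
  split.
  - intros Heq.
    assert (Hall : forall V : linf d -> Prop, ds_open d a V -> tychonoff_open d V)
      by (intros V HV; apply Heq; auto).
    split.
    + apply NNPP. intros Hncv. unfold Un_cv in Hncv.
      apply not_all_ex_not in Hncv as [eps Heps]. apply imply_to_and in Heps as [Heps Hn].
      destruct Hns as [u [v Huv]].
      assert (Hduv : 0 < d u v).
      { destruct (H0 u v) as [h|h]; auto. exfalso. apply Huv. apply H1. auto. }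
      apply (not_ds_tych d a Hd Hapos u (eps * d u v)); auto.
      { apply Rmult_lt_0_compat; lra. }
      intros N. pose proof (not_ex_all_not _ _ Hn N) as HN.
      apply not_all_ex_not in HN as [n Hn'].
      apply imply_to_and in Hn' as [Hge Hlt].
      exists n, v. split; [lia|].
      unfold R_dist in Hlt. rewrite Rminus_0_r, Rabs_right in Hlt by (pose proof (Hapos n); lra).
      apply Rmult_le_compat_r; lra.
    + apply NNPP. intros Hnb. destruct Hns as [u _].
      apply (not_ds_tych d a Hd Hapos u 1); auto; [lra|].
      intros N.
      assert (Hex : exists x y, 2 / a N < d x y).
      { apply NNPP; intro H; apply Hnb; exists (2/a N); intros x y; apply Rnot_lt_le; intro;
        apply H; eauto. }
      destruct Hex as [x [y Hxy]].
      pose proof (Hapos N) as HaN.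
      pose proof (H3 x u y). rewrite (H2 x u) in H.
      assert (Hinv : a N * (1/a N) = 1) by (field; lra).
      assert (Htwo : 2 / a N = 2 * (1 / a N)) by (field; lra).
      destruct (Rle_lt_dec (1/a N) (d u x)) as [Hx|Hx].
      * exists N, x. split; [lia|]. rewrite <- Hinv. apply Rmult_le_compat_l; lra.
      * exists N, y. split; [lia|]. rewrite <- Hinv. apply Rmult_le_compat_l; lra.
  - intros [Hcv [M HM]] V. split.
    + apply tych_to_ds; auto.
    + apply (ds_to_tych d a Hd Hapos Hcv M HM).
Qed.
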